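(* Let $R$ be a ring and let $\mathcal{L}$ and $\mathcal{G}$ be two classes of left $R$-modules such that $0\in\mathcal{L}$ and $R\in\mathcal{L}$. Then the following conditions are equivalent. (1) $\underline{\mathfrak{Pr}}^{-1}_{R\text{-Mod}}(\mathcal{L})=\mathcal{G}$. (2) $\underline{\mathfrak{Pr}}^{-1}_{\mathscr{C}(R)}(\mathscr{C}^b(\mathcal{L}))=\widetilde{\mathcal{G}}$. (3) $\underline{\mathfrak{Pr}}^{-1}_{\mathscr{C}(R)}(\mathscr{C}^-(\mathcal{L}))=\widetilde{\mathcal{G}}$. (4) $\underline{\mathfrak{Pr}}^{-1}_{\mathscr{C}(R)}(dg\widetilde{\mathcal{L}})=\widetilde{\mathcal{G}}$.
   Context: $R$ is an associative ring with unit; modules are left $R$-modules; $\mathscr{C}(R)$ is the category of homologically indexed complexes $X=(\cdots\to X_{n+1}\xrightarrow{d_{n+1}}X_n\xrightarrow{d_n}X_{n-1}\to\cdots)$. For objects $M,N$ of an abelian category $\mathscr{A}$ with enough projectives ($\mathscr{A}=R\text{-Mod}$ or $\mathscr{C}(R)$), $M$ is $N$-subprojective if every morphism $M\to N$ factors through a projective object of $\mathscr{A}$; $\underline{\mathfrak{Pr}}^{-1}_{\mathscr{A}}(M)$ is the class of all $N$ such that $M$ is $N$-subprojective, and for a class $\mathfrak{C}$, $\underline{\mathfrak{Pr}}^{-1}_{\mathscr{A}}(\mathfrak{C})$ is the class of $N$ such that every $C\in\mathfrak{C}$ is $N$-subprojective. A complex $X$ is bounded (resp. bounded below) if there is $b$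 with $X_n=0$ for all $n\ge b$ and for all $n\le b'$ for some $b'$ (resp. $X_n=0$ for all $n\le b$). For a class of modules $\mathcal{L}$: $\mathscr{C}^b(\mathcal{L})$ (resp. $\mathscr{C}^-(\mathcal{L})$) is the class of bounded (resp. bounded below) complexes with all terms in $\mathcal{L}$; $\widetilde{\mathcal{L}}$ is the class of exact complexes all of whose cycles $Z_n(X)=\mathrm{Ker}\,d_n$ lie in $\mathcal{L}$. For complexes $X,Y$, $\mathrm{Hom}^\bullet(X,Y)$ is the complex of abelian groups with $\mathrm{Hom}^\bullet(X,Y)_n=\prod_{i}\mathrm{Hom}_R(X_i,Y_{i+n})$ and differential $\psi\mapsto(d^Y_{i+n}\psi_i-(-1)^n\psi_{i-1}d^X_i)_i$. A complex $X$ is a $dg\mathcal{L}$ complex if $X_n\in\mathcal{L}$ for all $n$ and $\mathrm{Hom}^\bullet(X,G)$ is exact for every exact complex $G$ all of whose cycles lie in $\underline{\mathfrak{Pr}}^{-1}_{R\text{-Mod}}(\mathcal{L})$; $dg\widetilde{\mathcal{L}}$ denotes the class of $dg\mathcal{L}$ complexes. *)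

(* Defs.v *)
From HB Require Import structures.
From mathcomp Require Import all_boot all_order all_algebra.
Set Implicit Arguments. Unset Strict Implicit. Unset Printing Implicit Defensive.
Import Order.TTheory GRing.Theory Num.Theory.
Local Open Scope ring_scope.

Section Modules.
Variable R : pzRingType.

Definition trivial_mod (M : lmodType R) : Prop := forall x : M, x = 0.

Definition mod_iso (M N : lmodType R) : Prop :=
  exists (f : {linear M -> N}) (g : {linear N -> M}),
    (forall x, g (f x) = x) /\ (forall y, f (g y) = y).
Definition iso_closed (C : lmodType R -> Prop) : Prop :=
  forall M N, mod_iso M N -> C M -> C N.

Definition projective_mod (P : lmodType R) : Prop :=
  forall (M N : lmodType R) (g : {linear M -> N}),
    (forall y, exists x, g x = y) ->
    forall h : {linear P -> N}, exists k : {linear P -> M},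
      forall x, g (k x) = h x.

Definition subproj_mod (M N : lmodType R) : Prop :=
  forall f : {linear M -> N}, exists P : lmodType R, projective_mod P /\
    exists (a : {linear M -> P}) (b : {linear P -> N}), forall x, b (a x) = f x.

Definition PrInv_mod (C : lmodType R -> Prop) (N : lmodType R) : Prop :=
  forall M, C M -> subproj_mod M N.

Section Kernel.
Variables (M N : lmodType R) (f : {linear M -> N}).
Definition ker_pred : pred M := fun x => f x == 0.
Fact ker_closed : subsemimod_closed ker_pred.
Proof.
split; first split.
- by rewrite unfold_in /ker_pred raddf0.
- move=> x y; rewrite !unfold_in /ker_pred => /eqP Hx /eqP Hy.
  apply/eqP; rewrite raddfD; transitivity ((0 : N) + 0); last exact: addr0.
  by congr (_ + _); [exact: Hx | exact: Hy].
move=> a x; rewrite !unfold_in /ker_pred => /eqP Hx.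
apply/eqP; rewrite linearZ; transitivity (a *: (0 : N)); last exact: scaler0.
by congr (_ *: _); exact: Hx.
Qed.
HB.instance Definition _ := GRing.isSubmodClosed.Build R M ker_pred ker_closed.
Record kerT := KerT { kval : M; _ : kval \in ker_pred }.
HB.instance Definition _ := [isSub for kval].
HB.instance Definition _ := [Choice of kerT by <:].
HB.instance Definition _ := [SubChoice_isSubLmodule of kerT by <:].
End Kernel.

(* Complexes of left R-modules, homologically indexed.  The differential is
   encoded as a family [cd i j : X_i -> X_j] which is forced to be zero unless
   j = i - 1; thus [cd i (i-1)] is d_i. *)
Record cpx := Cpx {
  cobj :> int -> lmodType R;
  cd : forall i j : int, {linear cobj i -> cobj j};
  cd_zero : forall i j : int, j <> i - 1 -> forall x, cd i j x = 0;
  cd_sq : forall (i j k : int) x, cd j k (cd i j x) = 0 }.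

Record cmap (X Y : cpx) := CMap {
  cmf :> forall i : int, {linear X i -> Y i};
  cm_comm : forall (i j : int) x, cd Y i j (cmf i x) = cmf j (cd X i j x) }.

(* projective objects of C(R) (epimorphisms = degreewise surjective maps) *)
Definition projective_cpx (P : cpx) : Prop :=
  forall (A B : cpx) (g : cmap A B),
    (forall i y, exists x, g i x = y) ->
    forall h : cmap P B, exists k : cmap P A,
      forall i x, g i (k i x) = h i x.

Definition subproj_cpx (X Y : cpx) : Prop :=
  forall f : cmap X Y, exists P : cpx, projective_cpx P /\
    exists (a : cmap X P) (b : cmap P Y), forall i x, b i (a i x) = f i x.

Definition PrInv_cpx (C : cpx -> Prop) (Y : cpx) : Prop :=
  forall X, C X -> subproj_cpx X Y.

Definition cycles (X : cpx) (i : int) : lmodType R := kerT (cd X i (i - 1)).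

Definition exact_cpx (X : cpx) : Prop :=
  forall (i : int) (x : X i), cd X i (i - 1) x = 0 ->
    exists y : X (i + 1), cd X (i + 1) i y = x.

Definition bounded_cpx (X : cpx) : Prop :=
  exists b b' : int, forall n : int, (b <= n \/ n <= b') -> trivial_mod (X n).
Definition bounded_below_cpx (X : cpx) : Prop :=
  exists b : int, forall n : int, n <= b -> trivial_mod (X n).

Definition Cb (L : lmodType R -> Prop) (X : cpx) : Prop :=
  bounded_cpx X /\ forall n, L (X n).
Definition Cminus (L : lmodType R -> Prop) (X : cpx) : Prop :=
  bounded_below_cpx X /\ forall n, L (X n).
Definition tilde (L : lmodType R -> Prop) (X : cpx) : Prop :=
  exact_cpx X /\ forall n, L (cycles X n).

(* Hom^.(X,Y): an element of degree n is a family (psi_i : X_i -> Y_{i+n})_i;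
   we store it as a family [psi i j : X_i -> Y_j] of which only the
   components with j = i + n are used.  [homD n psi i j] is the component
   X_i -> Y_j (used with j = i + n - 1) of the differential
     (d^Y_{i+n} psi_i - (-1)^n psi_{i-1} d^X_i). *)
Definition homfam (X Y : cpx) := forall i j : int, {linear X i -> Y j}.
Definition homD (X Y : cpx) (n : int) (psi : homfam X Y) (i j : int)
  (x : X i) : Y j :=
  cd Y (i + n) j (psi i (i + n) x)
  - ((-1) ^+ `|n|%N) *: psi (i - 1) j (cd X i (i - 1) x).

Arguments homD {X Y} n psi i j x.

Definition hom_exact (X Y : cpx) : Prop :=
  forall (n : int) (psi : homfam X Y),
    (forall i x, homD n psi i (i + n - 1) x = 0) ->
    exists phi : homfam X Y, forall i x, psi i (i + n) x = homD (n + 1) phi i (i + n) x.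

Definition dgL (L : lmodType R -> Prop) (X : cpx) : Prop :=
  (forall n, L (X n)) /\
  forall G : cpx, exact_cpx G -> (forall n, PrInv_mod L (cycles G n)) ->
    hom_exact X G.

End Modules.
Arguments homD {R X Y} n psi i j x.

(* Main.v *)
Require Import Defs.
From HB Require Import structures.
From mathcomp Require Import all_boot all_order all_algebra.
From mathcomp Require Import zify.
From Stdlib Require Import IndefiniteDescription.
Set Implicit Arguments. Unset Strict Implicit. Unset Printing Implicit Defensive.
Import Order.TTheory GRing.Theory Num.Theory.
Local Open Scope ring_scope.

Lemma dchoice (I : Type) (T : I -> Type) (P : forall i, T i -> Prop) :
  (forall i, exists x, P i x) -> exists f : forall i, T i, forall i, P i (f i).
Proof.
move=> H; exists (fun i => proj1_sig (constructive_indefinite_description _ (H i))).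
by move=> i; case: (constructive_indefinite_description _ (H i)).
Qed.

Section Infra.
Variable R : pzRingType.

Definition mklin (M N : lmodType R) (f : M -> N) (H : linear f) : {linear M -> N} :=
  HB.pack f (GRing.isLinear.Build R M N *:%R f H).
Lemma mklinE (M N : lmodType R) (f : M -> N) (H : linear f) x : mklin H x = f x.
Proof. by []. Qed.

Lemma zlin_lin (M N : lmodType R) : linear (fun _ : M => (0 : N)).
Proof. by move=> a u v; rewrite scaler0 addr0. Qed.
Definition zlin (M N : lmodType R) : {linear M -> N} := mklin (@zlin_lin M N).

Lemma pairlin_lin (M A B : lmodType R) (f : {linear M -> A}) (g : {linear M -> B}) :
  linear (fun x => (f x, g x) : (A * B)%type).
Proof. by move=> a u v; rewrite !linearP. Qed.
Definition pairlin (M A B : lmodType R) (f : {linear M -> A}) (g : {linear M -> B}) :=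
  mklin (pairlin_lin f g).

Definition trf (F : int -> lmodType R) (a b : int) (e : a = b) (x : F a) : F b :=
  eq_rect a F x b e.
Lemma trf_lin (F : int -> lmodType R) (a b : int) (e : a = b) : linear (@trf F a b e).
Proof. by case: b / e. Qed.
Definition tr (F : int -> lmodType R) (a b : int) (e : a = b) := mklin (@trf_lin F a b e).
Arguments tr F {a b} e.
Lemma tr_id (F : int -> lmodType R) a (e : a = a) (x : F a) : tr F e x = x.
Proof. by rewrite (eq_irrelevance e erefl). Qed.

Definition trm (F : int -> lmodType R) (a b : int) : {linear F a -> F b} :=
  match a =P b with ReflectT e => tr F e | ReflectF _ => zlin _ _ end.
Lemma trm_id (F : int -> lmodType R) a (x : F a) : trm F a a x = x.
Proof. by rewrite /trm; case: eqP => // e; rewrite tr_id. Qed.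
Lemma trm_ne (F : int -> lmodType R) a b (x : F a) : a <> b -> trm F a b x = 0.
Proof. by rewrite /trm; case: eqP. Qed.
Lemma trm_eq0 (F : int -> lmodType R) a b (x : F a) : a = b -> trm F a b x = 0 -> x = 0.
Proof. by move=> e; case: b / e; rewrite trm_id. Qed.

Lemma trivial_proj (P : lmodType R) : trivial_mod P -> projective_mod P.
Proof.
move=> HP M N g _ h; exists (zlin P M) => x.
by rewrite (HP x) !linear0.
Qed.

End Infra.

Section Cone.
Variable R : pzRingType.
Variable N : int -> lmodType R.

Definition Cn_obj (i : int) : lmodType R := (N i * N (i + 1))%type.
Lemma Cn_d_lin (i j : int) :
  linear (fun p : Cn_obj i => ((0 : N j), trm N i (j + 1) p.1) : Cn_obj j).
Proof.
move=> a [t u] [t' u'] /=; rewrite linearP /=.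
by apply: injective_projections => /=; rewrite ?scaler0 ?addr0.
Qed.
Definition Cn_d i j := mklin (@Cn_d_lin i j).
Lemma Cn_dE i j (p : Cn_obj i) : Cn_d i j p = (0, trm N i (j + 1) p.1).
Proof. by []. Qed.
Lemma Cn_zero (i j : int) : j <> i - 1 -> forall x, Cn_d i j x = 0.
Proof. by move=> ne x; rewrite Cn_dE trm_ne //; lia. Qed.
Lemma Cn_sq (i j k : int) x : Cn_d j k (Cn_d i j x) = 0.
Proof. by rewrite !Cn_dE /= linear0. Qed.
Definition Cn : cpx R := @Cpx R Cn_obj Cn_d Cn_zero Cn_sq.

Lemma Cn_exact : exact_cpx Cn.
Proof.
move=> i [t u]; rewrite /= => /(congr1 snd) /= /trm_eq0 t0.
have {t0}-> : t = 0 by apply: t0; lia.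
by exists (u, 0); rewrite /= trm_id.
Qed.

Lemma Cn_proj : (forall i, projective_mod (N i)) -> projective_cpx Cn.
Proof.
move=> HN A B g gsurj h.
have [kap Hk] : exists kap : forall i, {linear N i -> A i},
    forall i t, g i (kap i t) = h i (t, 0).
  apply: (dchoice (T := fun i => {linear N i -> A i})
     (P := fun i k => forall t, g i (k t) = h i (t, 0))) => i.
  have [k Hk] := HN i (A i) (B i) (g i) (gsurj i)
     (h i \o pairlin (idfun : {linear N i -> N i}) (zlin (N i) (N (i + 1)))).
  by exists k => t; rewrite Hk.
pose kf i (p : Cn_obj i) : A i := kap i p.1 + cd A (i + 1) i (kap (i + 1) p.2).
have kl : forall i, linear (kf i).
  move=> i a [t u] [t' u']; rewrite /kf /= !linearP /= scalerDr.
  by rewrite addrACA.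
have kc : forall i j x, cd A i j (mklin (kl i) x) = mklin (kl j) (cd Cn i j x).
  move=> i j [t u]; rewrite !mklinE /kf /=.
  case: (boolP (j == i - 1)) => [/eqP ej | /eqP ne].
    have ei : i = j + 1 by lia.
    clear ej; subst i.
    by rewrite trm_id linear0 add0r linearD cd_sq addr0.
  by rewrite cd_zero // trm_ne ?linear0 ?addr0 //; lia.
exists (@CMap R Cn A (fun i => mklin (kl i)) kc) => i [t u] /=; rewrite /kf linearD Hk -cm_comm Hk cm_comm.
rewrite Cn_dE /= trm_id -linearD; congr (h i _).
by apply: injective_projections => /=; rewrite ?addr0 ?add0r.
Qed.

End Cone.

Section ProjCpx.
Variable R : pzRingType.

Lemma trm_const (V : lmodType R) a b (x : V) :
  trm (fun _ : int => V) a b x = if a == b then x else 0.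
Proof.
rewrite /trm; case: eqP => [e|ne] //=.
by case: b / e.
Qed.

Lemma idc_comm (X : cpx R) :
  forall i j (x : X i), cd X i j ((idfun : {linear X i -> X i}) x) =
    (idfun : {linear X j -> X j}) (cd X i j x).
Proof. by []. Qed.
Definition idc (X : cpx R) : cmap X X := @CMap R X X (fun i => idfun) (@idc_comm X).

Variable Q : cpx R.
Hypothesis HQ : projective_cpx Q.

Definition pif i (p : Cn_obj Q i) : Q i := p.1 + cd Q (i + 1) i p.2.
Lemma pif_lin i : linear (@pif i).
Proof. by move=> a [t u] [t' u']; rewrite /pif /= !linearP /= scalerDr addrACA. Qed.
Lemma pif_comm i j (p : Cn Q i) :
  cd Q i j (mklin (@pif_lin i) p) = mklin (@pif_lin j) (cd (Cn Q) i j p).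
Proof.
case: p => t u; rewrite !mklinE /pif /=.
case: (boolP (j == i - 1)) => [/eqP ej | /eqP ne].
  have ei : i = j + 1 by lia.
  clear ej; subst i.
  by rewrite trm_id linearD cd_sq addr0 add0r.
by rewrite cd_zero // trm_ne ?linear0 ?addr0 //; lia.
Qed.
Definition piC : cmap (Cn Q) Q := @CMap R (Cn Q) Q (fun i => mklin (@pif_lin i)) pif_comm.

Lemma proj_split : exists l : forall i, {linear Q i -> Q (i + 1)},
  forall i q, cd Q i (i - 1) q = 0 -> q = cd Q (i + 1) i (l i q).
Proof.
have surj : forall i (y : Q i), exists x, piC i x = y.
  by move=> i y; exists (y, 0); rewrite /= /pif /= linear0 addr0.
have [sig Hs] := HQ surj (idc Q).
exists (fun i => (snd : {linear Cn_obj Q i -> Q (i + 1)}) \o sig i) => i q q0.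
have := cm_comm sig (i - 1) q; rewrite q0 linear0 /=.
move/(congr1 snd) => /= /trm_eq0 t0.
have := Hs i q; rewrite /= /pif.
case: (sig i q) t0 => t u /= t0.
have -> : t = 0 by apply: t0; lia.
by rewrite add0r => ->.
Qed.

Lemma proj_exact : exact_cpx Q.
Proof.
have [l Hl] := proj_split.
by move=> i x x0; exists (l i x); rewrite -Hl.
Qed.

Lemma proj_comp k : projective_mod (Q k).
Proof.
move=> M' N' p psurj h.
pose hh i : {linear Q i -> N'} := h \o trm Q i k.
pose psf i (x : Q i) : Cn_obj (fun _ => N') i := (hh (i - 1) (cd Q i (i - 1) x), hh i x).
have psl : forall i, linear (psf i).
  move=> i a x y; rewrite /psf !linearP /=.
  by apply: injective_projections.
have psc : forall i j (x : Q i), cd (Cn (fun _ => N')) i j (mklin (psl i) x) =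
    mklin (psl j) (cd Q i j x).
  move=> i j x; rewrite !mklinE /psf /=.
  case: (boolP (j == i - 1)) => [/eqP ej | /eqP ne].
    have ei : i = j + 1 by lia.
    clear ej; subst i.
    by rewrite trm_id cd_sq linear0 addrK linear0.
  rewrite (cd_zero ne) trm_ne; last lia.
  by rewrite !linear0.
pose psi := @CMap R Q (Cn (fun _ => N')) (fun i => mklin (psl i)) psc.
pose cpf i (x : Cn_obj (fun _ => M') i) : Cn_obj (fun _ => N') i := (p x.1, p x.2).
have cpl : forall i, linear (cpf i).
  move=> i a x y; rewrite /cpf !linearP /=.
  by apply: injective_projections.
have cpc : forall i j (x : Cn (fun _ => M') i), cd (Cn (fun _ => N')) i j (mklin (cpl i) x) =
    mklin (cpl j) (cd (Cn (fun _ => M')) i j x).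
  move=> i j [t u]; rewrite !mklinE /cpf /= !trm_const.
  apply: injective_projections => /=; first by rewrite linear0.
  by case: eqP => //; rewrite linear0.
pose cp := @CMap R (Cn (fun _ => M')) (Cn (fun _ => N')) (fun i => mklin (cpl i)) cpc.
have cps : forall i (y : Cn (fun _ => N') i), exists x, cp i x = y.
  move=> i [y1 y2].
  have [x1 <-] := psurj y1; have [x2 <-] := psurj y2.
  by exists (x1, x2).
have [kap Hk] := HQ cps psi.
exists ((snd : {linear Cn_obj (fun _ => M') k -> M'}) \o kap k) => x /=.
have := congr1 snd (Hk k x); rewrite /= /psf /hh /= trm_id => <-.
by [].
Qed.

End ProjCpx.

Section Mods.
Variable R : pzRingType.

Section Corestr.
Variables (A B C : lmodType R) (k : {linear B -> C}) (f : {linear A -> B}).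
Hypothesis H : forall x, k (f x) = 0.
Lemma corestr_mem x : f x \in ker_pred k.
Proof. by rewrite unfold_in /ker_pred H. Qed.
Definition corestr_f x : kerT k := Sub (f x) (corestr_mem x).
Lemma corestr_lin : linear corestr_f.
Proof. by move=> a x y; apply: val_inj; rewrite /corestr_f /= linearP. Qed.
Definition corestr := mklin corestr_lin.
Lemma corestrE x : val (corestr x) = f x.
Proof. by rewrite /corestr mklinE /corestr_f SubK. Qed.
End Corestr.

Lemma kval0 (B C : lmodType R) (k : {linear B -> C}) (x : kerT k) : k (val x) = 0.
Proof. by have := valP x; rewrite unfold_in /ker_pred => /eqP. Qed.

Lemma iso_sym (A B : lmodType R) : mod_iso A B -> mod_iso B A.
Proof. by move=> [f [g [H1 H2]]]; exists g, f. Qed.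

Lemma triv_iso (A B : lmodType R) : trivial_mod A -> trivial_mod B -> mod_iso A B.
Proof.
move=> HA HB; exists (zlin A B), (zlin B A); split => x.
  by rewrite (HA x) !linear0.
by rewrite (HB x) !linear0.
Qed.

Lemma iso_triv (A B : lmodType R) : mod_iso A B -> trivial_mod A -> trivial_mod B.
Proof. by move=> [f [g [H1 H2]]] HA y; rewrite -(H2 y) (HA (g y)) linear0. Qed.

Lemma ker0_iso (B C : lmodType R) (k : {linear B -> C}) :
  (forall x, k x = 0) -> mod_iso B (kerT k).
Proof.
move=> H; exists (@corestr B B C k idfun H), val; split => x //.
by apply: val_inj.
Qed.

Lemma kerid_triv (B : lmodType R) (k : {linear B -> B}) :
  (forall x, k x = x) -> trivial_mod (kerT k).
Proof.
move=> H x; apply: val_inj; rewrite linear0.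
by have := kval0 x; rewrite H.
Qed.

Lemma subproj_iso (L : lmodType R -> Prop) (M N N' : lmodType R) :
  mod_iso N N' -> subproj_mod M N -> subproj_mod M N'.
Proof.
move=> [u [w [H1 H2]]] HS f.
have [P [PP [a [b Hab]]]] := HS (w \o f).
exists P; split => //; exists a, (u \o b) => x /=.
by rewrite Hab /= H2.
Qed.

Lemma PrInv_iso (L : lmodType R -> Prop) : iso_closed (PrInv_mod L).
Proof. by move=> N N' HN HP M LM; apply: (subproj_iso L HN); apply: HP. Qed.

Lemma PrInv_triv (L : lmodType R -> Prop) (N : lmodType R) :
  trivial_mod N -> PrInv_mod L N.
Proof.
move=> HN M LM f; exists N; split; first exact: trivial_proj.
by exists f, idfun.
Qed.

Lemma LIFT (L : lmodType R -> Prop) (Y : cpx R) (i : int) :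
  exact_cpx Y -> PrInv_mod L (cycles Y i) ->
  forall M, L M -> forall g : {linear M -> cycles Y i},
  exists P : lmodType R, projective_mod P /\
    exists (a : {linear M -> P}) (c : {linear P -> Y (i + 1)}),
      forall x, cd Y (i + 1) i (c (a x)) = val (g x).
Proof.
move=> Hex HP M LM g.
have [P [PP [a [b Hab]]]] := HP M LM g.
have Hsq : forall x, cd Y i (i - 1) (cd Y (i + 1) i x) = 0 by move=> x; apply: cd_sq.
pose dd := corestr Hsq.
have surj : forall z : cycles Y i, exists y, dd y = z.
  move=> z; have [y Hy] := Hex i (val z) (kval0 z).
  by exists y; apply: val_inj; rewrite corestrE.
have [c Hc] := PP _ _ dd surj b.
exists P; split => //; exists a, c => x.
by rewrite -(corestrE Hsq) Hc Hab.
Qed.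

End Mods.

Section Sphere.
Variable R : pzRingType.
Variables (M : lmodType R) (n : int).

Definition sw (i : int) : {linear M -> M} :=
  if i == n then zlin M M else (idfun : {linear M -> M}).
Definition Sph_obj (i : int) : lmodType R := kerT (sw i).
Definition Sph_d (i j : int) : {linear Sph_obj i -> Sph_obj j} := zlin _ _.
Lemma Sph_zero (i j : int) : j <> i - 1 -> forall x, Sph_d i j x = 0.
Proof. by []. Qed.
Lemma Sph_sq (i j k : int) x : Sph_d j k (Sph_d i j x) = 0.
Proof. by []. Qed.
Definition Sph : cpx R := @Cpx R Sph_obj Sph_d Sph_zero Sph_sq.

Lemma Sph_triv i : i != n -> trivial_mod (Sph_obj i).
Proof. by move=> ne; apply: kerid_triv => x; rewrite /sw (negbTE ne). Qed.
Lemma Sph_nn x : sw n x = 0.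
Proof. by rewrite /sw eqxx. Qed.
Definition Sph_in : {linear M -> Sph_obj n} := @corestr R M M M (sw n) idfun Sph_nn.
Lemma Sph_inE m : val (Sph_in m) = m.
Proof. by []. Qed.
Lemma Sph_iso : mod_iso M (Sph_obj n).
Proof. exact: ker0_iso Sph_nn. Qed.

Section SphMap.
Variables (Y : cpx R) (v : {linear M -> Y n}).
Hypothesis Hv : forall m, cd Y n (n - 1) (v m) = 0.
Lemma Sph_map_comm i j (x : Sph i) :
  cd Y i j ((trm Y n i \o v \o val) x) = (trm Y n j \o v \o val) (cd Sph i j x).
Proof.
rewrite /= !linear0.
case: (eqVneq i n) => [ei|ne].
  subst i; rewrite trm_id.
  case: (eqVneq j (n - 1)) => [->|nej]; first exact: Hv.
  by rewrite cd_zero //; apply/eqP.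
by rewrite trm_ne ?linear0 //; apply/eqP; rewrite eq_sym.
Qed.
Definition Sph_map : cmap Sph Y := @CMap R Sph Y (fun i => trm Y n i \o v \o val) Sph_map_comm.
Lemma Sph_mapE m : Sph_map n (Sph_in m) = v m.
Proof. by rewrite /= trm_id. Qed.
End SphMap.

Variable L : lmodType R -> Prop.
Hypothesis HLiso : iso_closed L.
Hypothesis HLtriv : forall A, trivial_mod A -> L A.
Hypothesis HLM : L M.

Lemma Sph_L i : L (Sph_obj i).
Proof.
case: (eqVneq i n) => [->|ne]; first exact: HLiso Sph_iso HLM.
exact/HLtriv/Sph_triv.
Qed.

Lemma Sph_Cb : Cb L Sph.
Proof.
split; last exact: Sph_L.
exists (n + 1), (n - 1) => k Hk; apply: Sph_triv; apply/eqP; lia.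
Qed.

Lemma Sph_Cm : Cminus L Sph.
Proof.
split; last exact: Sph_L.
exists (n - 1) => k Hk; apply: Sph_triv; apply/eqP; lia.
Qed.

Lemma Sph_dg : dgL L Sph.
Proof.
split; first exact: Sph_L.
move=> G Gex GP m psi Hpsi.
have [phi Hphi] : exists phi : homfam Sph G, forall i j, j = i + (m + 1) ->
    forall x, cd G j (i + m) (phi i j x) = psi i (i + m) x.
  apply: (dchoice (T := fun i => forall j, {linear Sph i -> G j})
    (P := fun i f => forall j, j = i + (m + 1) ->
       forall x, cd G j (i + m) (f j x) = psi i (i + m) x)) => i.
  apply: (dchoice (T := fun j => {linear Sph i -> G j})
    (P := fun j f => j = i + (m + 1) ->
       forall x, cd G j (i + m) (f x) = psi i (i + m) x)) => j.
  case: (eqVneq j (i + (m + 1))) => [ej|nej]; last first.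
    by exists (zlin _ _) => ej; move/eqP: nej.
  subst j.
  case: (eqVneq i n) => [ei|nei]; last first.
    exists (zlin _ _) => _ x.
    by rewrite (Sph_triv nei x) /= !linear0.
  subst i.
  have Hc : forall x, cd G (n + m) (n + m - 1) (psi n (n + m) x) = 0.
    move=> x; have := Hpsi n x; rewrite /homD /= !linear0.
    by rewrite scaler0 subr0.
  have [P [PP [a [c Hac]]]] := LIFT Gex (GP (n + m)) (Sph_L n) (corestr Hc).
  rewrite addrA; exists (c \o a) => _ x /=.
  by rewrite Hac corestrE.
exists phi => i x; rewrite /homD /= !linear0 scaler0 subr0.
by rewrite Hphi.
Qed.

End Sphere.

Section DirB.
Variable R : pzRingType.
Variable L : lmodType R -> Prop.
Hypothesis HLR : L R^o.
Variable C : cpx R -> Prop.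
Hypothesis HC : forall (M : lmodType R) n, L M -> C (Sph M n).

Lemma dirB (Y : cpx R) : PrInv_cpx C Y -> tilde (PrInv_mod L) Y.
Proof.
move=> HY; split.
  move=> i y y0.
  have vl : linear (fun r : R^o => (r : R) *: y).
    by move=> a r s; rewrite scalerDl scalerA.
  pose v := mklin vl.
  have Hv : forall r, cd Y i (i - 1) (v r) = 0.
    by move=> r; rewrite mklinE linearZ y0; apply: scaler0.
  have [Q [PQ [al [be Hab]]]] := HY _ (HC i HLR) (Sph_map Hv).
  pose q := al i (Sph_in R^o i 1).
  have q0 : cd Q i (i - 1) q = 0 by rewrite /q cm_comm /= linear0.
  have [q' Hq'] := proj_exact PQ q0.
  exists (be (i + 1) q'); rewrite cm_comm Hq' /q Hab Sph_mapE.
  by rewrite mklinE scale1r.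
move=> n M LM g.
pose v := (val : {linear cycles Y n -> Y n}) \o g.
have Hv : forall m, cd Y n (n - 1) (v m) = 0 by move=> m; exact: kval0.
have [Q [PQ [al [be Hab]]]] := HY _ (HC n LM) (Sph_map Hv).
have [l Hl] := proj_split PQ.
have Hsq : forall x, cd Y n (n - 1) ((cd Y (n + 1) n \o be (n + 1)) x) = 0.
  by move=> x; apply: cd_sq.
exists (Q (n + 1)); split; first exact: proj_comp.
exists (l n \o al n \o Sph_in M n), (corestr Hsq) => m.
apply: val_inj; rewrite corestrE /=.
apply: etrans (cm_comm be n _) _; rewrite -Hl.
  by rewrite Hab Sph_mapE.
by apply: etrans (cm_comm al _ _) _; rewrite /= linear0.
Qed.
End DirB.

Section Homotopy.
Variable R : pzRingType.

Lemma proj_prod (A B : lmodType R) :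
  projective_mod A -> projective_mod B -> projective_mod (A * B)%type.
Proof.
move=> PA PB M N g gs h.
have [kA HA] := PA M N g gs (h \o pairlin idfun (zlin A B)).
have [kB HB] := PB M N g gs (h \o pairlin (zlin B A) idfun).
have kl : linear (fun p : (A * B)%type => kA p.1 + kB p.2).
  by move=> a [x y] [x' y'] /=; rewrite !linearP scalerDr addrACA.
exists (mklin kl) => [[x y]]; rewrite mklinE /= linearD HA HB /= -linearD.
by congr (h _); apply: injective_projections => /=; rewrite ?addr0 ?add0r.
Qed.

Definition HEq (X Y : cpx R) (f : cmap X Y) (s : homfam X Y) :=
  forall i (x : X i), f i x = cd Y (i + 1) i (s i (i + 1) x) + s (i - 1) i (cd X i (i - 1) x).

Lemma NH1 (X Y : cpx R) (f : cmap X Y) (H : homfam X Y) : HEq f H ->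
  (forall m, exists N : lmodType R, projective_mod N /\
     exists (a : {linear X m -> N}) (c : forall l, {linear N -> Y l}),
       forall l x, c l (a x) = H m l x) ->
  exists P : cpx R, projective_cpx P /\
    exists (a : cmap X P) (b : cmap P Y), forall i x, b i (a i x) = f i x.
Proof.
move=> HE HF.
have HF2 : forall i, exists s : {N : lmodType R & ((forall j, {linear X j -> N}) * {linear N -> Y i})%type},
    projective_mod (projT1 s) /\ forall j, i = j + 1 -> forall x,
      (projT2 s).2 ((projT2 s).1 j x) = H j i x.
  move=> i; have [N [PN [a [c Hac]]]] := HF (i - 1).
  have [af Haf] : exists af : forall j, {linear X j -> N}, forall j, i = j + 1 ->
      forall x, c i (af j x) = H j i x.
    apply: (dchoice (T := fun j => {linear X j -> N})
      (P := fun j af => i = j + 1 -> forall x, c i (af x) = H j i x)) => j.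
    case: (eqVneq i (j + 1)) => [e|ne]; last by exists (zlin _ _) => e; move/eqP: ne.
    have ej : j = i - 1 by lia.
    by subst j; exists a => _ x; apply: Hac.
  by exists (existT _ N (af, c i)).
have [F HF3] := dchoice HF2.
pose Nf i := projT1 (F i).
pose af i : forall j, {linear X j -> Nf i} := (projT2 (F i)).1.
pose cf i : {linear Nf i -> Y i} := (projT2 (F i)).2.
have Hac : forall i j, i = j + 1 -> forall x, cf i (af i j x) = H j i x.
  by move=> i j; apply: (proj2 (HF3 i)).
have PN : forall i, projective_mod (Nf i) by move=> i; apply: (proj1 (HF3 i)).
pose alf i (x : X i) : Cn_obj Nf i := (af i (i - 1) (cd X i (i - 1) x), af (i + 1) i x).
have all : forall i, linear (alf i).
  by move=> i a x y; rewrite /alf !linearP; apply: injective_projections.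
have alc : forall i j (x : X i), cd (Cn Nf) i j (mklin (all i) x) = mklin (all j) (cd X i j x).
  move=> i j x; rewrite !mklinE /alf /=.
  case: (boolP (j == i - 1)) => [/eqP ej | /eqP ne].
    have ei : i = j + 1 by lia.
    clear ej; subst i.
    rewrite trm_id cd_sq !linear0 addrK.
    by apply: injective_projections.
  by rewrite (cd_zero ne) trm_ne ?linear0 //; lia.
pose al := @CMap R X (Cn Nf) (fun i => mklin (all i)) alc.
pose bef i (p : Cn_obj Nf i) : Y i := cf i p.1 + cd Y (i + 1) i (cf (i + 1) p.2).
have bel : forall i, linear (bef i).
  by move=> i a [t u] [t' u']; rewrite /bef /= !linearP scalerDr addrACA.
have bec : forall i j (p : Cn Nf i), cd Y i j (mklin (bel i) p) = mklin (bel j) (cd (Cn Nf) i j p).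
  move=> i j [t u]; rewrite !mklinE /bef /=.
  case: (boolP (j == i - 1)) => [/eqP ej | /eqP ne].
    have ei : i = j + 1 by lia.
    clear ej; subst i.
    by rewrite trm_id linearD cd_sq addr0 linear0 add0r.
  by rewrite (cd_zero ne) trm_ne ?linear0 ?addr0 //; lia.
pose be := @CMap R (Cn Nf) Y (fun i => mklin (bel i)) bec.
exists (Cn Nf); split; first exact: Cn_proj.
exists al, be => i x; rewrite /= /bef /alf /=.
rewrite (Hac i (i - 1)); last by lia.
by rewrite Hac // HE addrC.
Qed.

Variable L : lmodType R -> Prop.

Lemma NH2 (X Y : cpx R) (f : cmap X Y) (s : homfam X Y) :
  (forall n, L (X n)) -> exact_cpx Y -> (forall n, PrInv_mod L (cycles Y n)) ->
  HEq f s ->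
  exists H : homfam X Y, HEq f H /\
  (forall m, exists N : lmodType R, projective_mod N /\
     exists (a : {linear X m -> N}) (c : forall l, {linear N -> Y l}),
       forall l x, c l (a x) = H m l x).
Proof.
move=> LX Yex YP HE.
have Da : forall i, exists d : {P : lmodType R & ({linear X i -> P} * (forall k, {linear P -> Y k}))%type},
    projective_mod (projT1 d) /\ forall x,
      cd Y (i + 1) i ((projT2 d).2 (i + 1) ((projT2 d).1 x)) = cd Y (i + 1) i (s i (i + 1) x).
  move=> i.
  have Hc : forall x, cd Y i (i - 1) ((cd Y (i + 1) i \o s i (i + 1)) x) = 0.
    by move=> x; apply: cd_sq.
  have [P [PP [a [c Hac]]]] := LIFT Yex (YP i) (LX i) (corestr Hc).
  exists (existT _ P (a, fun k => (trm Y (i + 1) k \o c : {linear P -> Y k}))); split => // x /=.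
  by rewrite trm_id Hac corestrE.
have [Fa HFa] := dchoice Da.
pose Pf i := projT1 (Fa i).
pose af i : {linear X i -> Pf i} := (projT2 (Fa i)).1.
pose cf i : forall k, {linear Pf i -> Y k} := (projT2 (Fa i)).2.
have Ha : forall i x, cd Y (i + 1) i (cf i (i + 1) (af i x)) = cd Y (i + 1) i (s i (i + 1) x).
  by move=> i; apply: (proj2 (HFa i)).
have PP : forall i, projective_mod (Pf i) by move=> i; apply: (proj1 (HFa i)).
have Db : forall i, exists d : {P : lmodType R & ({linear X i -> P} * (forall k, {linear P -> Y k}))%type},
    projective_mod (projT1 d) /\ forall x,
      cd Y (i + 1 + 1) (i + 1) ((projT2 d).2 (i + 1 + 1) ((projT2 d).1 x)) =
        s i (i + 1) x - cf i (i + 1) (af i x).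
  move=> i.
  have tl : linear (fun x => s i (i + 1) x - cf i (i + 1) (af i x)).
    move=> a x y; rewrite (linearP (s i (i + 1))) (linearP (af i)) (linearP (cf i (i + 1))).
    by rewrite scalerBr opprD addrACA.
  have Hc : forall x, cd Y (i + 1) (i + 1 - 1) (mklin tl x) = 0.
    by move=> x; rewrite addrK mklinE linearB Ha subrr.
  have [P [PP' [a [c Hac]]]] := LIFT Yex (YP (i + 1)) (LX i) (corestr Hc).
  exists (existT _ P (a, fun k => (trm Y (i + 1 + 1) k \o c : {linear P -> Y k}))); split => // x /=.
  by rewrite trm_id Hac corestrE.
have [Fb HFb] := dchoice Db.
pose Qf i := projT1 (Fb i).
pose bf i : {linear X i -> Qf i} := (projT2 (Fb i)).1.
pose df i : forall k, {linear Qf i -> Y k} := (projT2 (Fb i)).2.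
have Hb : forall i x, cd Y (i + 1 + 1) (i + 1) (df i (i + 1 + 1) (bf i x)) =
    s i (i + 1) x - cf i (i + 1) (af i x).
  by move=> i; apply: (proj2 (HFb i)).
have PQ : forall i, projective_mod (Qf i) by move=> i; apply: (proj1 (HFb i)).
pose H m l : {linear X m -> Y l} :=
  (cf m l \o af m) \+ ((df (m - 1) l \o bf (m - 1)) \o cd X m (m - 1)).
exists H; split.
  move=> m x; rewrite /H /= linearD Ha.
  have := Hb (m - 1) (cd X m (m - 1) x); rewrite subrK => ->.
  rewrite cd_sq !linear0 addr0 HE.
  by rewrite addrA subrK.
move=> m; exists (Pf m * Qf (m - 1))%type; split; first exact: proj_prod.
exists (pairlin (af m) (bf (m - 1) \o cd X m (m - 1))).
have cl : forall l, linear (fun p : (Pf m * Qf (m - 1))%type => cf m l p.1 + df (m - 1) l p.2).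
  by move=> l a [x y] [x' y'] /=; rewrite !linearP scalerDr addrACA.
by exists (fun l => mklin (cl l)) => l x.
Qed.

End Homotopy.

Section DirA.
Variable R : pzRingType.
Variable L : lmodType R -> Prop.

Lemma dg_homot (X Y : cpx R) (f : cmap X Y) : hom_exact X Y -> exists s, HEq f s.
Proof.
move=> Hhe.
pose psi : homfam X Y := fun i j => trm Y i j \o f i.
have Hp : forall i x, homD 0 psi i (i + 0 - 1) x = 0.
  move=> i x; rewrite /homD addr0 /psi /= !trm_id cm_comm expr0 scale1r.
  by rewrite subrr.
have [phi Hphi] := Hhe 0 psi Hp.
exists phi => i x; have := Hphi i x.
rewrite /homD addr0 add0r /psi /= trm_id => ->.
by rewrite expr1 scaleN1r opprK.
Qed.

Section Induction.
Variables (X Y : cpx R) (f : cmap X Y) (b : int).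
Hypothesis Xb : forall n, n <= b -> trivial_mod (X n).
Hypothesis LX : forall n, L (X n).
Hypothesis Yex : exact_cpx Y.
Hypothesis YP : forall n, PrInv_mod L (cycles Y n).

Definition HEi (s : homfam X Y) i := forall x : X i,
  f i x = cd Y (i + 1) i (s i (i + 1) x) + s (i - 1) i (cd X i (i - 1) x).
Definition Inv (k : nat) (s : homfam X Y) := forall i, i <= b + k%:Z -> HEi s i.

Lemma HEi_triv s i : trivial_mod (X i) -> HEi s i.
Proof. by move=> T x; rewrite (T x) !linear0 addr0. Qed.

Lemma Inv_step k s : Inv k s -> exists s', Inv k.+1 s' /\
  forall i j, i <> b + k%:Z + 1 -> s' i j = s i j.
Proof.
move=> Hs.
have Hg : forall x : X (b + k%:Z + 1), cd Y (b + k%:Z + 1) (b + k%:Z + 1 - 1)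
   (f (b + k%:Z + 1) x - s (b + k%:Z + 1 - 1) (b + k%:Z + 1)
      (cd X (b + k%:Z + 1) (b + k%:Z + 1 - 1) x)) = 0.
  move=> x; rewrite linearB cm_comm.
  have := Hs (b + k%:Z + 1 - 1) _ (cd X (b + k%:Z + 1) (b + k%:Z + 1 - 1) x).
  rewrite subrK cd_sq linear0 addr0 => ->; last by lia.
  by rewrite subrr.
have gl : linear (fun x : X (b + k%:Z + 1) => f (b + k%:Z + 1) x -
      s (b + k%:Z + 1 - 1) (b + k%:Z + 1) (cd X (b + k%:Z + 1) (b + k%:Z + 1 - 1) x)).
  move=> a x y; rewrite (linearP (f _)) (linearP (cd X _ _)) (linearP (s _ _)).
  by rewrite scalerBr opprD addrACA.
have Hg' : forall x, cd Y (b + k%:Z + 1) (b + k%:Z + 1 - 1) (mklin gl x) = 0 by [].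
have [P [PP [a [c Hac]]]] := LIFT Yex (@YP (b + k%:Z + 1)) (@LX (b + k%:Z + 1)) (corestr Hg').
have [s' Hs'] : exists s' : homfam X Y, forall i j,
    (i <> b + k%:Z + 1 -> s' i j = s i j) /\
    (i = b + k%:Z + 1 -> j = i + 1 -> forall x,
       cd Y j i (s' i j x) = f i x - s (i - 1) i (cd X i (i - 1) x)).
  have H1 : forall i, exists m : forall j, {linear X i -> Y j}, forall j,
      (i <> b + k%:Z + 1 -> m j = s i j) /\
      (i = b + k%:Z + 1 -> j = i + 1 -> forall x,
         cd Y j i (m j x) = f i x - s (i - 1) i (cd X i (i - 1) x)).
    move=> i; apply: (dchoice (T := fun j => {linear X i -> Y j})
      (P := fun j m => (i <> b + k%:Z + 1 -> m = s i j) /\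
        (i = b + k%:Z + 1 -> j = i + 1 -> forall x,
           cd Y j i (m x) = f i x - s (i - 1) i (cd X i (i - 1) x)))) => j.
  case: (eqVneq i (b + k%:Z + 1)) => [ei|nei]; last first.
    by exists (s i j); split => // /eqP; rewrite (negbTE nei).
  subst i.
  case: (eqVneq j (b + k%:Z + 1 + 1)) => [ej|nej]; last first.
    by exists (zlin _ _); split => // _ /eqP; rewrite (negbTE nej).
  subst j; exists (c \o a); split => // _ _ x.
  have [F HF] := dchoice H1; exists F => i j; exact: HF.
exists s'; split; last by move=> i j /(proj1 (Hs' i j)).
move=> i ile.
case: (eqVneq i (b + k%:Z + 1)) => [ei|nei].
  move=> x; rewrite (proj1 (Hs' (i - 1) i)); last by lia.
  rewrite (proj2 (Hs' i (i + 1))) //.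
  by rewrite subrK.
have ile' : i <= b + k%:Z by move/eqP: nei; lia.
move=> x; rewrite (proj1 (Hs' i (i + 1))); last by apply/eqP.
rewrite (proj1 (Hs' (i - 1) i)); last by lia.
exact: Hs.
Qed.

Lemma Inv0 : Inv 0 (fun i j => zlin (X i) (Y j)).
Proof. by move=> i ile; apply: HEi_triv; apply: Xb; lia. Qed.

Fixpoint seqs (k : nat) : {s : homfam X Y | Inv k s} :=
  match k with
  | 0 => exist _ _ Inv0
  | k'.+1 => let p := seqs k' in
      let q := constructive_indefinite_description _ (Inv_step (proj2_sig p)) in
      exist _ (proj1_sig q) (proj1 (proj2_sig q))
  end.

Lemma seqs_succ k i j : i <> b + k%:Z + 1 ->
  proj1_sig (seqs k.+1) i j = proj1_sig (seqs k) i j.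
Proof.
move=> ne; rewrite /=.
case: (constructive_indefinite_description _ _) => s' [_ H] /=.
exact: H.
Qed.

Lemma seqs_stable k d i j : i <= b + k%:Z ->
  proj1_sig (seqs (k + d)) i j = proj1_sig (seqs k) i j.
Proof.
move=> ile; elim: d => [|d IH]; first by rewrite addn0.
by rewrite addnS seqs_succ ?IH //; lia.
Qed.

Definition kof (i : int) : nat := absz (i - b).

Lemma cm_homot : exists s, HEq f s.
Proof.
exists (fun i j => proj1_sig (seqs (kof i)) i j) => i.
case: (lerP i b) => [ib|bi].
  by move=> x; rewrite (Xb ib x) !linear0 addr0.
have ek : kof i = (kof (i - 1) + 1)%N by rewrite /kof; lia.
move=> x.
have -> : proj1_sig (seqs (kof (i - 1))) (i - 1) i =
    proj1_sig (seqs (kof i)) (i - 1) i.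
  by rewrite ek seqs_stable //; rewrite /kof; lia.
apply: (proj2_sig (seqs (kof i))).
by rewrite /kof; lia.
Qed.

End Induction.

Lemma dirA_gen (C : cpx R -> Prop)
  (HC : forall X, C X -> (forall n, L (X n)) /\ forall Y, exact_cpx Y ->
      (forall n, PrInv_mod L (cycles Y n)) -> forall f : cmap X Y, exists s, HEq f s)
  (Y : cpx R) : tilde (PrInv_mod L) Y -> PrInv_cpx C Y.
Proof.
move=> [Yex YP] X CX f.
have [LX Hs] := HC X CX.
have [s Hs'] := Hs Y Yex YP f.
have [H [HH HF]] := NH2 LX Yex YP Hs'.
exact: NH1 HH HF.
Qed.

End DirA.

Section Final.
Variable R : pzRingType.

Lemma Cn_cyc_iso (N : int -> lmodType R) i : mod_iso (N (i + 1)) (cycles (Cn N) i).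
Proof.
have H : forall u, cd (Cn N) i (i - 1) (pairlin (zlin (N (i + 1)) (N i)) idfun u) = 0.
  by move=> u; rewrite /= linear0.
exists (corestr H), ((snd : {linear Cn_obj N i -> N (i + 1)}) \o val); split => x //.
apply: val_inj; rewrite corestrE /=.
have := kval0 x; rewrite /= => /(congr1 snd) /= /trm_eq0 t0.
have x0 : (kval x).1 = 0 by apply: t0; lia.
by move: x0; case: (kval x) => a b /= ->.
Qed.

Lemma tilde_sub (A B : lmodType R -> Prop) :
  iso_closed A -> iso_closed B -> (forall T, trivial_mod T -> A T) ->
  (forall Y, tilde A Y -> tilde B Y) -> forall N, A N -> B N.
Proof.
move=> HA HB HAt HAB N AN.
have TA : tilde A (Cn (Sph_obj N 0)).
  split; first exact: Cn_exact.
  move=> i; apply: (HA _ _ (Cn_cyc_iso _ i)).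
  case: (eqVneq (i + 1) 0) => [->|ne]; first exact: HA (Sph_iso N 0) AN.
  exact/HAt/Sph_triv.
have [_ /(_ (-1))] := HAB _ TA.
move/(HB _ _ (iso_sym (Cn_cyc_iso _ (-1)))).
have -> : -1 + 1 = 0 :> int by [].
exact: HB _ _ (iso_sym (Sph_iso N 0)).
Qed.

Variable L : lmodType R -> Prop.
Hypothesis HLiso : iso_closed L.
Hypothesis HL0 : exists Z : lmodType R, trivial_mod Z /\ L Z.
Hypothesis HLR : L R^o.

Lemma HLtriv : forall A, trivial_mod A -> L A.
Proof. by move=> A TA; have [Z [TZ LZ]] := HL0; exact: HLiso (triv_iso TZ TA) LZ. Qed.

Lemma Cb_Cm X : Cb L X -> Cminus L X.
Proof. by move=> [[b [b' H]] LX]; split => //; exists b' => n nb; apply: H; right. Qed.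

Lemma dirA_Cm Y : tilde (PrInv_mod L) Y -> PrInv_cpx (Cminus L) Y.
Proof.
apply: dirA_gen => X [[b Xb] LX]; split => // Y' Yex YP f.
exact: (cm_homot f Xb LX Yex YP).
Qed.

Lemma K_Cb Y : PrInv_cpx (Cb L) Y <-> tilde (PrInv_mod L) Y.
Proof.
split.
  apply: dirB => // M n LM; exact: Sph_Cb HLiso HLtriv LM.
by move/dirA_Cm => H X /Cb_Cm; apply: H.
Qed.

Lemma K_Cm Y : PrInv_cpx (Cminus L) Y <-> tilde (PrInv_mod L) Y.
Proof.
split; last exact: dirA_Cm.
apply: dirB => // M n LM; exact: Sph_Cm HLiso HLtriv LM.
Qed.

Lemma K_dg Y : PrInv_cpx (dgL L) Y <-> tilde (PrInv_mod L) Y.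
Proof.
split.
  apply: dirB => // M n LM; exact: Sph_dg HLiso HLtriv LM.
apply: dirA_gen => X [LX HX]; split => // Y' Yex YP f.
exact: dg_homot (HX Y' Yex YP).
Qed.

Variable G : lmodType R -> Prop.
Hypothesis HGiso : iso_closed G.

Lemma equiv_gen (C : cpx R -> Prop) :
  (forall Y, PrInv_cpx C Y <-> tilde (PrInv_mod L) Y) ->
  (forall N, PrInv_mod L N <-> G N) <-> (forall Y, PrInv_cpx C Y <-> tilde G Y).
Proof.
move=> K; split.
  move=> H1 Y; rewrite K; split => -[Yex YP]; split => // n.
    exact: (proj1 (H1 _) (YP n)).
  exact: (proj2 (H1 _) (YP n)).
move=> H2.
have HT : forall Y, tilde (PrInv_mod L) Y <-> tilde G Y.
  by move=> Y; rewrite -K H2.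
have [Z [TZ _]] := HL0.
have Gt : forall T, trivial_mod T -> G T.
  have TZZ : tilde (PrInv_mod L) (Cn (fun _ => Z)).
    split; first exact: Cn_exact.
    move=> n; apply: PrInv_triv => z; apply: val_inj; rewrite linear0.
    by apply: injective_projections; apply: TZ.
  have [_ /(_ 0) G0] := proj1 (HT _) TZZ.
  move=> T TT; apply: HGiso G0; apply: triv_iso => // z.
  apply: val_inj; rewrite linear0.
  by apply: injective_projections; apply: TZ.
move=> N; split.
  apply: tilde_sub => //; first exact: PrInv_iso.
    by move=> T TT; apply: PrInv_triv.
  by move=> Y /HT.
apply: tilde_sub => //; first exact: PrInv_iso.
by move=> Y /HT.
Qed.

End Final.

Theorem theorem3p6 (R : pzRingType) (L G : lmodType R -> Prop)
  (HLiso : iso_closed L) (HGiso : iso_closed G)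
  (HL0 : exists Z : lmodType R, trivial_mod Z /\ L Z)
  (HLR : L R^o) :
  let c1 := forall N : lmodType R, PrInv_mod L N <-> G N in
  let c2 := forall X : cpx R, PrInv_cpx (Cb L) X <-> tilde G X in
  let c3 := forall X : cpx R, PrInv_cpx (Cminus L) X <-> tilde G X in
  let c4 := forall X : cpx R, PrInv_cpx (dgL L) X <-> tilde G X in
  [/\ c1 <-> c2, c1 <-> c3 & c1 <-> c4].
Proof.
move=> c1 c2 c3 c4; subst c1 c2 c3 c4; split.
- exact: equiv_gen (K_Cb HLiso HL0 HLR).
- exact: equiv_gen (K_Cm HLiso HL0 HLR).
- exact: equiv_gen (K_dg HLiso HL0 HLR).
Qed.
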